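(* Let $\sigma>0$, $\eta>0$, $\hat\alpha>0$, $h>0$, $r\ge0$, $a\in\mathbb{R}$, and for $\beta\ge0$ let $v_\beta$ denote the unique $C^1[0,\infty)$ solution of $\frac{\sigma^2}2v'(y)=\beta+\frac{\hat\alpha}4v(y)^2+\eta y(v(y)-\frac h\eta)-av(y)$, $y\ge0$, $v(0)=-r$. If $0\le\beta_1<\beta_2$, then $v_{\beta_1}(x)<v_{\beta_2}(x)$ for all $x>0$. *)

(* Defs.v *)
From Stdlib Require Import Reals.
From Coquelicot Require Import Coquelicot.
Open Scope R_scope.

Definition ode_rhs (eta alpha h a beta y w : R) : R :=
  beta + alpha / 4 * w ^ 2 + eta * y * (w - h / eta) - a * w.

Definition C1_on_nonneg (v v' : R -> R) : Prop :=
  (forall y, 0 < y -> is_derive v y (v' y)) /\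
  filterlim (fun t => (v t - v 0) / t) (at_right 0) (locally (v' 0)) /\
  (forall y, 0 < y -> continuous v' y) /\
  filterlim v' (at_right 0) (locally (v' 0)).

Definition is_solution (sigma eta alpha h r a beta : R) (v : R -> R) : Prop :=
  exists v' : R -> R,
    C1_on_nonneg v v' /\
    (forall y, 0 <= y -> sigma ^ 2 / 2 * v' y = ode_rhs eta alpha h a beta y (v y)) /\
    v 0 = - r.

(* Main.v *)
Require Import Defs.
From Stdlib Require Import Reals Lra.
From Coquelicot Require Import Coquelicot.
Open Scope R_scope.

Lemma at_right_ex (f:R->R) l : filterlim f (at_right 0) (locally l) ->
  forall eps, 0<eps -> exists d, 0<d /\ forall t, 0<t<d -> Rabs (f t - l) < eps.
Proof.
intros H eps He. apply filterlim_locally with (eps:=mkposreal eps He) in H.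
destruct H as [d Hd]. exists d; split. apply cond_pos. intros t [t0 td].
specialize (Hd t). unfold ball in Hd; simpl in Hd; unfold AbsRing_ball, abs, minus, plus, opp in Hd; simpl in Hd.
apply Hd; auto. unfold Rminus; rewrite Ropp_0, Rplus_0_r, Rabs_pos_eq; lra.
Qed.

Lemma deriv_ex f y l : is_derive f y l -> forall eps, 0<eps -> exists d, 0<d /\
  forall h, h<>0 -> Rabs h < d -> Rabs ((f(y+h)-f y)/h - l) < eps.
Proof.
intros H eps He. apply is_derive_Reals in H. destruct (H eps He) as [d Hd].
exists d; split. apply cond_pos. exact Hd.
Qed.

Lemma cont_ex f y l : is_derive f y l -> forall eps, 0<eps -> exists d, 0<d /\
  forall z, Rabs(z-y)<d -> Rabs(f z - f y)<eps.
Proof.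
intros H eps He. assert (C: continuous f y).
{ apply ex_derive_continuous. exists l; exact H. }
apply filterlim_locally with (eps:=mkposreal eps He) in C.
destruct C as [d Hd]. exists d; split. apply cond_pos. intros z Hz.
specialize (Hd z). unfold ball in Hd; simpl in Hd; unfold AbsRing_ball, abs, minus, plus, opp in Hd; simpl in Hd.
apply Hd; auto.
Qed.

Theorem lemma16 (sigma eta alpha h r a beta1 beta2 : R) (v1 v2 : R -> R) :
  0 < sigma -> 0 < eta -> 0 < alpha -> 0 < h -> 0 <= r ->
  0 <= beta1 -> beta1 < beta2 ->
  is_solution sigma eta alpha h r a beta1 v1 ->
  is_solution sigma eta alpha h r a beta2 v2 ->
  forall x, 0 < x -> v1 x < v2 x.
Proof.
intros Hs He Ha Hh Hr Hb1 Hb [d1 [[D1 [R1 _]] [E1 I1]]] [d2 [[D2 [R2 _]] [E2 I2]]] x Hx.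
set (w := fun t => v2 t - v1 t).
assert (S2 : 0 < sigma^2/2) by (apply Rmult_lt_0_compat; [apply pow_lt; lra | lra]).
assert (Kc : forall y, 0 <= y -> v1 y = v2 y -> 0 < d2 y - d1 y).
{ intros y Hy Hv. apply Rmult_lt_reg_l with (sigma^2/2); auto. rewrite Rmult_0_r.
  rewrite Rmult_minus_distr_l, E1, E2 by auto. unfold ode_rhs. rewrite Hv. lra. }
assert (Dw : forall y, 0 < y -> is_derive w y (d2 y - d1 y)).
{ intros y Hy. unfold w. apply (is_derive_minus v2 v1); auto. }
assert (w0 : w 0 = 0) by (unfold w; rewrite I1, I2; ring).
assert (L0 := Kc 0 (Rle_refl 0) (eq_trans I1 (eq_sym I2))).
set (L := d2 0 - d1 0) in L0.
destruct (at_right_ex _ _ R1 (L/4)) as [e1 [He1 H1]]; [lra|].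
destruct (at_right_ex _ _ R2 (L/4)) as [e2 [He2 H2]]; [lra|].
set (d0 := Rmin e1 e2).
assert (P0 : forall t, 0 < t < d0 -> w t > 0).
{ intros t Ht. assert (t < e1) by (apply Rlt_le_trans with d0; [lra| apply Rmin_l]).
  assert (t < e2) by (apply Rlt_le_trans with d0; [lra| apply Rmin_r]).
  specialize (H1 t ltac:(lra)). specialize (H2 t ltac:(lra)).
  apply Rabs_def2 in H1. apply Rabs_def2 in H2.
  assert (Q: (v2 t - v2 0)/t - (v1 t - v1 0)/t > 0) by (unfold L in *; lra).
  replace ((v2 t - v2 0)/t - (v1 t - v1 0)/t) with (w t / t) in Q
    by (unfold w; rewrite I1, I2; field; lra).
  assert (w t = (w t / t) * t) by (field; lra).
  rewrite H3. apply Rmult_lt_0_compat; lra. }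
assert (Hd0 : 0 < d0) by (unfold d0; apply Rmin_glb_lt; auto).
destruct (Rlt_or_le (v1 x) (v2 x)) as [Hok|Hbad]; [exact Hok| exfalso].
assert (Wx : w x <= 0) by (unfold w; lra).
destruct (Rlt_or_le x d0) as [Hxs|Hxl].
{ specialize (P0 x ltac:(lra)). lra. }
set (B := fun t => 0 <= t <= x /\ forall s, 0 < s <= t -> w s > 0).
assert (Bb : bound B) by (exists x; intros t [Ht _]; lra).
assert (Bne : B (d0/2)).
{ split. lra. intros s Hs0. apply P0. lra. }
destruct (completeness B Bb (ex_intro _ _ Bne)) as [m [Mub Mlub]].
assert (m0 : d0/2 <= m) by (apply Mub; auto).
assert (mx : m <= x) by (apply Mlub; intros t [Ht _]; lra).
assert (Pos : forall s, 0 < s < m -> w s > 0).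
{ intros s Hs0. destruct (Rlt_or_le 0 (w s)) as [ok|ko]; [exact ok|exfalso].
  assert (m <= s); [|lra]. apply Mlub. intros t [Ht Hw].
  destruct (Rle_or_lt t s) as [ok|lt]; [exact ok|].
  specialize (Hw s ltac:(lra)). lra. }
assert (mp : 0 < m) by lra.
destruct (Rtotal_order (w m) 0) as [Hn|[Hz|Hp]].
- destruct (cont_ex _ _ _ (Dw m mp) (- w m) ltac:(lra)) as [d [Hd Hc]].
  set (s := m - Rmin m d / 2).
  assert (Rmin m d <= m) by apply Rmin_l. assert (Rmin m d <= d) by apply Rmin_r.
  assert (0 < Rmin m d) by (apply Rmin_glb_lt; auto).
  specialize (Hc s). specialize (Pos s).
  assert (Hsd : Rabs (s - m) < d) by (unfold s; rewrite Rabs_left; lra).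
  specialize (Hc Hsd). apply Rabs_def2 in Hc. unfold s in *. specialize (Pos ltac:(lra)). lra.
- assert (Hv : v1 m = v2 m) by (unfold w in Hz; lra).
  assert (Lm := Kc m ltac:(lra) Hv).
  destruct (deriv_ex _ _ _ (Dw m mp) ((d2 m - d1 m)/2) ltac:(lra)) as [d [Hd Hq]].
  assert (Rmin m d <= m) by apply Rmin_l. assert (Rmin m d <= d) by apply Rmin_r.
  assert (0 < Rmin m d) by (apply Rmin_glb_lt; auto).
  set (k := - (Rmin m d / 2)).
  specialize (Hq k ltac:(unfold k; lra)).
  assert (Hkd : Rabs k < d) by (unfold k; rewrite Rabs_left; lra).
  specialize (Hq Hkd). apply Rabs_def2 in Hq. rewrite Hz in Hq.
  specialize (Pos (m + k) ltac:(unfold k; lra)).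
  assert (w (m+k) = ((w (m+k) - 0)/k) * k) by (field; unfold k; lra).
  assert (((w (m+k) - 0)/k) * k < 0) by (apply Rmult_pos_neg; unfold k in *; lra).
  lra.
- destruct (Req_dec m x) as [E|NE]. { rewrite E in Hp. lra. }
  destruct (cont_ex _ _ _ (Dw m mp) (w m) ltac:(lra)) as [d [Hd Hc]].
  set (t := Rmin (m + d/2) x).
  assert (t <= m + d/2) by apply Rmin_l. assert (t <= x) by apply Rmin_r.
  assert (m < t) by (apply Rmin_glb_lt; lra).
  assert (Bt : B t).
  { split. lra. intros s Hs0. destruct (Rlt_or_le s m) as [lt|ge].
    - apply Pos; lra.
    - assert (Hsd : Rabs (s - m) < d) by (rewrite Rabs_pos_eq; lra).
      specialize (Hc s Hsd). apply Rabs_def2 in Hc. lra. }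
  specialize (Mub t Bt). lra.
Qed.
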